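(* Let $A$ be a $0$-$1$ matrix over a set $\mathcal G$ with no identically zero rows, and let $L_\alpha$ and $\psi$ be as in the context. Then every element of $C(\widetilde\Omega_A,\mathbb Z)$ is equivalent, modulo $L_\alpha\big(\bigoplus_{x\in\mathcal G}C(\Delta_x,\mathbb Z)\big)$, to an element of $\psi(\tilde{\mathfrak R}_A)$.
   Context: $\mathbb F$ is the free group on $\mathcal G$, $\mathbb F^+$ the unital subsemigroup generated by $\mathcal G$. $\Omega_A^\tau$ is the set of $\xi\subset\mathbb F$ such that $e\in\xi$, $\xi$ is convex (contains the shortest path between any two of its elements), for each $\omega\in\xi$ there is at most one $y\in\mathcal G$ with $\omega y\in\xi$, and if $\omega,\omega y\in\xi$ ($y\in\mathcal G$) then for $x\in\mathcal G$: $\omega x^{-1}\in\xi\iff A(x,y)=1$. With the product topology on subsets of $\mathbb F$, $\widetilde\Omega_A$ is the closure in $\Omega_A^\tau$ of the elements with no upper bound for the order $s\le t\iff s^{-1}t\in\mathbb F^+$. $\Delta_t=\{\xi\in\widetilde\Omega_A:t\in\xi\}$ (clopen). $L_\alpha:\bigoplus_{x\in\mathcal G}C(\Delta_x,\mathbb Z)\to C(\widetilde\Omega_A,\mathbb Z)$ is $L_\alpha f=\sum_x\big(f_x-\alpha_x^{-1}(f_x)\big)$, where $f_x$ is extended by $0$ off $\Delta_x$ and $\alpha_x^{-1}(f_x)(\xi)=f_x(x\xi)$ for $\xi\in\Delta_{x^{-1}}$, $0$ otherwise. $\rho_i(j)=A(i,j)$, $\delta_i=$ indicator of $\{i\}$;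 $\tilde R_A\subset\ell^\infty(\mathcal G)$ is the $C^*$-algebra generated by $\mathbf 1$ and all $\rho_i,\delta_i$; $\tilde{\mathfrak R}_A\subset\mathbb Z^{\mathcal G}$ is the ring generated by $\mathbf 1$ and all $\delta_i,\rho_i$. $\tilde{\mathcal G}=\mathcal G\cup\{\star\}$; $c_j(i)=A(i,j)$; $\tilde\Gamma_A$ is the closure of $\{(j,c_j)\}$ in $\tilde{\mathcal G}\times\{0,1\}^{\mathcal G}$; each $f\in\tilde R_A$ has a unique continuous extension $\hat f$ to $\tilde\Gamma_A$ (identifying $j$ with $(j,c_j)$). For $\xi\in\widetilde\Omega_A$, $R_\xi(e)=\{x\in\mathcal G:x^{-1}\in\xi\}$ and $\sigma(\xi)_1$ is the unique element of $\xi\cap\mathcal G$, or $\star$ if that set is empty. $\psi:\tilde R_A\to C(\widetilde\Omega_A)$ is $\psi(f)(\xi)=\hat f(\sigma(\xi)_1,R_\xi(e))$; it is an injective unital $*$-homomorphism with $\psi(\delta_i)=1_{\Delta_i}$ and $\psi(\rho_i)=1_{\Delta_{i^{-1}}}$. *)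

(* Defs.v *)
From HB Require Import structures.
From mathcomp Require Import all_boot all_algebra.
From mathcomp Require Import boolp.
From Stdlib Require Import ClassicalEpsilon.

Set Implicit Arguments.
Unset Strict Implicit.
Unset Printing Implicit Defensive.
Import GRing.Theory Num.Theory.

Section FreeGroup.
Variable G : eqType.

(* A letter (x, true) stands for the generator x, (x, false) for x^{-1}. *)
Definition letter := (G * bool)%type.
Definition linv (a : letter) : letter := (a.1, ~~ a.2).

Fixpoint reduced (w : seq letter) : bool :=
  match w with
  | a :: ((b :: _) as w') => (b != linv a) && reduced w'
  | _ => true
  end.

Definition cons_red (a : letter) (w : seq letter) : seq letter :=
  match w with
  | b :: w' => if b == linv a then w' else a :: w
  | [::] => [:: a]
  end.

Definition norm (w : seq letter) : seq letter := foldr cons_red [::] w.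

Lemma cons_red_reduced a w : reduced w -> reduced (cons_red a w).
Proof.
case: w => [|b w] //= H.
case: ifP => [_|/negbT nb].
- by case: w H => [|c w] // /andP[].
- by rewrite [reduced _]/= nb H.
Qed.

Lemma norm_reduced w : reduced (norm w).
Proof. by elim: w => //= a w IH; apply: cons_red_reduced. Qed.

Definition FG := {w : seq letter | reduced w}.
Definition mkFG (w : seq letter) : FG := exist _ (norm w) (norm_reduced w).
Definition fe : FG := mkFG [::].
Definition fmul (u v : FG) : FG := mkFG (val u ++ val v).
Definition finv (u : FG) : FG := mkFG (rev (map linv (val u))).
Definition gen (x : G) : FG := mkFG [:: (x, true)].

Definition positive (u : FG) : bool := all (fun a : letter => a.2) (val u).
Definition fle (s t : FG) : Prop := positive (fmul (finv s) t).

Definition FGset := FG -> Prop.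

(* convex: contains the geodesic (in the Cayley tree) between any two elements:
   the vertices w * p, p a prefix of the reduced word w^{-1} v. *)
Definition convex (xi : FGset) : Prop :=
  forall w v, xi w -> xi v ->
    forall k, xi (fmul w (mkFG (take k (val (fmul (finv w) v))))).

Variable A : G -> G -> bool.

Definition OmegaTau (xi : FGset) : Prop :=
  [/\ xi fe, convex xi,
      (forall w y1 y2, xi w -> xi (fmul w (gen y1)) -> xi (fmul w (gen y2)) -> y1 = y2)
    & (forall w y, xi w -> xi (fmul w (gen y)) ->
        forall x, xi (fmul w (finv (gen x))) <-> A x y)].

Definition unbounded (xi : FGset) : Prop :=
  ~ exists t, forall s, xi s -> fle s t.

(* closure in OmegaTau (product topology on subsets of F) of the unbounded elements *)
Definition Omega (xi : FGset) : Prop :=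
  OmegaTau xi /\
  forall F : seq FG, exists eta, [/\ OmegaTau eta, unbounded eta &
                                   forall s, s \in F -> (eta s <-> xi s)].

Definition Delta (t : FG) (xi : FGset) : Prop := Omega xi /\ xi t.

(* f : D -> Z continuous for the (subspace of the) product topology, Z discrete *)
Definition contOn (D : FGset -> Prop) (f : FGset -> int) : Prop :=
  forall xi, D xi -> exists F : seq FG, forall eta, D eta ->
     (forall s, s \in F -> (eta s <-> xi s)) -> f eta = f xi.

Definition ext (D : FGset -> Prop) (f : FGset -> int) (xi : FGset) : int :=
  if pselect (D xi) then f xi else 0%R.

Definition translate (x : FG) (xi : FGset) : FGset := fun s => xi (fmul (finv x) s).

Definition alpha_inv (x : G) (f : FGset -> int) (xi : FGset) : int :=
  if pselect (Delta (finv (gen x)) xi) then f (translate (gen x) xi) else 0%R.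

(* L_alpha applied to the family f, supported on the (finite) list S *)
Definition Lalpha (S : seq G) (f : G -> FGset -> int) (xi : FGset) : int :=
  (\sum_(x <- S) (ext (Delta (gen x)) (f x) xi - alpha_inv x (f x) xi))%R.

Inductive InRing : (G -> int) -> Prop :=
| InR1 : InRing (fun _ => 1%R)
| InRdelta i : InRing (fun j => Posz (nat_of_bool (j == i)))
| InRrho i : InRing (fun j => Posz (nat_of_bool (A i j)))
| InRadd h1 h2 : InRing h1 -> InRing h2 -> InRing (fun j => h1 j + h2 j)%R
| InRopp h : InRing h -> InRing (fun j => - h j)%R
| InRmul h1 h2 : InRing h1 -> InRing h2 -> InRing (fun j => h1 j * h2 j)%R.

(* sigma(xi)_1 : Some y if y \in xi (y in G), None (= star) if xi \cap G is empty *)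
Definition SigmaRel (xi : FGset) (o : option G) : Prop :=
  match o with Some y => xi (gen y) | None => forall y, ~ xi (gen y) end.

(* hat h (o, R) = v : h is eventually v on the points (j, c_j) near (o, R) in
   tilde G x {0,1}^G, with tilde G = G \cup {star} the one-point compactification
   of the discrete set G. *)
Definition HatLim (h : G -> int) (o : option G) (R : G -> Prop) (v : int) : Prop :=
  exists K F : seq G, forall j,
    (match o with Some y => j = y | None => j \notin K end) ->
    (forall i, i \in F -> (A i j <-> R i)) -> h j = v.

(* psi(h)(xi) = hat h (sigma(xi)_1, R_xi(e)), R_xi(e) = {x : x^{-1} \in xi} *)
Definition psi (h : G -> int) (xi : FGset) : int :=
  epsilon (inhabits 0%R) (fun v => exists o, SigmaRel xi o /\
                               HatLim h o (fun i => xi (finv (gen i))) v).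

End FreeGroup.

(* Main.v *)
Require Import Defs.
From HB Require Import structures.
From mathcomp Require Import all_boot all_algebra.
From mathcomp Require Import boolp.
From mathcomp Require Import ring.
From Stdlib Require Import ClassicalEpsilon.
Import Defs.
Set Implicit Arguments.
Unset Strict Implicit.
Unset Printing Implicit Defensive.
Import GRing.Theory.

Lemma le_sum_seq (T : eqType) (F : seq T) (f : T -> nat) s :
  s \in F -> f s <= \sum_(t <- F) f t.
Proof.
elim: F => //= t F IH; rewrite inE big_cons => /orP[/eqP->|/IH H].
  exact: leq_addr.
exact: leq_trans H (leq_addl _ _).
Qed.

Section FreeG.
Variable G : eqType.
Local Notation letter := (letter G).
Local Notation FG := (FG G).

Lemma linvK (a : letter) : linv (linv a) = a.
Proof. by case: a => x []. Qed.

Lemma linv_eq (a b : letter) : (linv a == b) = (a == linv b).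
Proof. by case: a b => x [] [y []]. Qed.

Lemma reduced_behead (a : letter) w : reduced (a :: w) -> reduced w.
Proof. by case: w => //= b w /andP[]. Qed.

Lemma reduced_head (a b : letter) w : reduced (a :: b :: w) -> b != linv a.
Proof. by case/andP. Qed.

Lemma norm_id (w : seq letter) : reduced w -> norm w = w.
Proof.
elim: w => //= a w IH Hr; rewrite IH; last exact: reduced_behead Hr.
case: w Hr {IH} => //= b w /andP[nb _]; by rewrite (negbTE nb).
Qed.

Definition act (u w : seq letter) := foldr (@cons_red G) w u.

Lemma normE u : norm u = act u [::].
Proof. by []. Qed.

Lemma act_cat u v w : act (u ++ v) w = act u (act v w).
Proof. by rewrite /act foldr_cat. Qed.

Lemma norm_cat u v : norm (u ++ v) = act u (norm v).
Proof. by rewrite /norm foldr_cat. Qed.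

Lemma act_reduced u w : reduced w -> reduced (act u w).
Proof. elim: u => //= a u IH Hw; apply: cons_red_reduced; exact: IH. Qed.

Lemma cons_red_inv (a : letter) w : reduced w ->
  cons_red a (cons_red (linv a) w) = w.
Proof.
case: w => [|b w] /=.
  by rewrite eqxx.
case: ifP => [/eqP Hb|Hb] Hr.
  rewrite linvK in Hb; subst b.
  case: w Hr => [|c w] //= /andP[nc _]; by rewrite (negbTE nc).
by rewrite /= eqxx.
Qed.

Lemma act_cons_red a r w : reduced r -> reduced w ->
  act (cons_red a r) w = cons_red a (act r w).
Proof.
case: r => [|b r] //= Hr Hw.
case: ifP => // /eqP ->; rewrite cons_red_inv //.
apply: act_reduced; exact: Hw.
Qed.

Lemma act_norm u w : reduced w -> act (norm u) w = act u w.
Proof.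
move=> Hw; elim: u => //= a u IH.
by rewrite act_cons_red ?IH // norm_reduced.
Qed.

Lemma act_inv u w : reduced w -> act (rev (map (@linv G) u)) (act u w) = w.
Proof.
move=> Hw; elim: u => //= a u IH.
rewrite rev_cons -cats1 act_cat /=.
have H := cons_red_inv (linv a) (act_reduced u Hw); rewrite linvK in H.
by rewrite H IH.
Qed.

Lemma FG_eq (u v : FG) : val u = val v -> u = v.
Proof. exact: val_inj. Qed.

Lemma val_mkFG (w : seq letter) : val (mkFG w) = norm w.
Proof. by []. Qed.

Lemma mkFG_red (w : seq letter) : reduced w -> val (mkFG w) = w.
Proof. by move=> H; rewrite val_mkFG norm_id. Qed.

Lemma mkFGK (u : FG) : mkFG (val u) = u.
Proof. by apply: FG_eq; rewrite mkFG_red //; exact: valP. Qed.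

Lemma val_fmul (u v : FG) : val (fmul u v) = act (val u) (val v).
Proof. by rewrite /fmul val_mkFG norm_cat norm_id //; exact: valP. Qed.

Lemma val_finv (u : FG) : val (finv u) = norm (rev (map (@linv G) (val u))).
Proof. by []. Qed.

Lemma val_fe : val (fe G) = [::].
Proof. by []. Qed.

Lemma fmulA (u v w : FG) : fmul (fmul u v) w = fmul u (fmul v w).
Proof.
apply: FG_eq; rewrite !val_fmul.
rewrite -{1}(norm_id (valP v)) -norm_cat act_norm ?act_cat //; exact: valP.
Qed.

Lemma fmul1 (u : FG) : fmul (fe G) u = u.
Proof. by apply: FG_eq; rewrite val_fmul. Qed.

Lemma fmul1r (u : FG) : fmul u (fe G) = u.
Proof.
apply: FG_eq; rewrite val_fmul val_fe -normE norm_id //; exact: valP.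
Qed.

Lemma fmulVl (u : FG) : fmul (finv u) u = fe G.
Proof.
apply: FG_eq; rewrite val_fmul val_finv act_norm; last exact: valP.
rewrite -{2}(norm_id (valP u)) normE act_inv //.
Qed.

Lemma fmulVr (u : FG) : fmul u (finv u) = fe G.
Proof.
apply: FG_eq; rewrite val_fmul val_finv val_fe normE.
have := act_inv (rev (map (@linv G) (val u))) (erefl true : reduced [::]).
by rewrite map_rev revK -map_comp (eq_map linvK) map_id.
Qed.

Lemma finvK (u : FG) : finv (finv u) = u.
Proof.
by rewrite -[LHS]fmul1r -(fmulVl u) -fmulA fmulVl fmul1.
Qed.

Lemma finv_mul (u v : FG) : finv (fmul u v) = fmul (finv v) (finv u).
Proof.
have H : fmul (fmul u v) (fmul (finv v) (finv u)) = fe G.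
  by rewrite fmulA -(fmulA v) fmulVr fmul1 fmulVr.
by rewrite -[LHS]fmul1r -H -fmulA fmulVl fmul1.
Qed.

Lemma finv1 : finv (fe G) = fe G.
Proof. by apply: FG_eq. Qed.

Lemma fmulKV (u v : FG) : fmul (finv u) (fmul u v) = v.
Proof. by rewrite -fmulA fmulVl fmul1. Qed.

Lemma fmulK (u v : FG) : fmul u (fmul (finv u) v) = v.
Proof. by rewrite -fmulA fmulVr fmul1. Qed.

Definition lt1 (a : letter) : FG := mkFG [:: a].

Lemma val_lt a : val (lt1 a) = [:: a].
Proof. by []. Qed.

Lemma gen_lt x : gen x = lt1 (x, true).
Proof. by []. Qed.

Lemma finv_lt a : finv (lt1 a) = lt1 (linv a).
Proof. by apply: FG_eq. Qed.

Lemma finv_gen x : finv (gen x) = lt1 (x, false).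
Proof. by rewrite gen_lt finv_lt. Qed.

Lemma FG_dec (u : FG) a w : val u = a :: w -> u = fmul (lt1 a) (mkFG w).
Proof.
move=> Hu; have Hr : reduced (a :: w) by rewrite -Hu; exact: valP.
apply: FG_eq; rewrite val_fmul val_lt mkFG_red ?Hu; last exact: reduced_behead Hr.
rewrite /= ; case: w Hr {Hu} => //= b w /andP[nb _]; by rewrite (negbTE nb).
Qed.

Lemma all_cons_red (P : pred letter) a w : P a -> all P w -> all P (cons_red a w).
Proof.
case: w => [|b w] /= Pa; first by rewrite Pa.
move=> /andP[Pb Pw]; case: ifP => _ //=; by rewrite Pa Pb Pw.
Qed.

Lemma all_norm (P : pred letter) w : all P w -> all P (norm w).
Proof. elim: w => //= a w IH /andP[Pa Pw]; apply: all_cons_red => //; exact: IH. Qed.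

End FreeG.

Section OmegaL.
Variable G : eqType.
Variable A : G -> G -> bool.
Local Notation letter := (letter G).
Local Notation FG := (FG G).
Local Notation OT := (OmegaTau A).
Local Notation Om := (Omega A).

Lemma OT_e xi : OT xi -> xi (fe G).
Proof. by case. Qed.

Lemma OT_uniq xi y1 y2 : OT xi -> xi (gen y1) -> xi (gen y2) -> y1 = y2.
Proof.
case=> H1 _ H3 _ h1 h2; apply: (H3 (fe G)); by rewrite ?fmul1.
Qed.

Lemma OT_A xi x y : OT xi -> xi (gen y) -> (xi (finv (gen x)) <-> A x y).
Proof.
case=> H1 _ _ H4 hy; have := H4 (fe G) y H1; rewrite !fmul1; by move/(_ hy x).
Qed.

Lemma OT_pre xi u a w : OT xi -> xi u -> val u = a :: w -> xi (lt1 a).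
Proof.
case=> H1 H2 _ _ hu Hu; have := H2 _ _ H1 hu 1.
by rewrite finv1 !fmul1 Hu /= take0.
Qed.

Lemma OT_translate xi (t : FG) : OT xi -> xi (finv t) -> OT (translate t xi).
Proof.
case=> H1 H2 H3 H4 ht; rewrite /translate; split.
- by rewrite fmul1r.
- move=> w v hw hv k; have := H2 _ _ hw hv k.
  by rewrite finv_mul finvK [fmul (fmul (finv w) t) _]fmulA fmulK fmulA.
- move=> w y1 y2 hw; rewrite -!fmulA; exact: H3.
- move=> w y hw; rewrite -!fmulA => hy x; rewrite -fmulA; exact: H4.
Qed.

Lemma translate_comp (t u : FG) (xi : FGset G) s : translate t (translate u xi) s = translate (fmul t u) xi s.
Proof. by rewrite /translate finv_mul fmulA. Qed.

Lemma unbounded_translate (t : FG) (eta : FGset G) : unbounded eta -> unbounded (translate t eta).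
Proof.
move=> Hu [T HT]; apply: Hu; exists (fmul (finv t) T) => s hs.
have := HT (fmul t s); rewrite /translate fmulKV => /(_ hs).
by rewrite /fle finv_mul fmulA.
Qed.

Lemma Omega_OT xi : Om xi -> OT xi.
Proof. by case. Qed.

Lemma Omega_translate xi (t : FG) : Om xi -> xi (finv t) -> Om (translate t xi).
Proof.
case=> HT Hc ht; split; first exact: OT_translate.
move=> F; have [eta [Heta Hu Hag]] := Hc (finv t :: map (fmul (finv t)) F).
have het : eta (finv t) by apply/Hag => //; rewrite inE eqxx.
exists (translate t eta); split.
- exact: OT_translate.
- exact: unbounded_translate.
- move=> s hs; rewrite /translate; apply: Hag.
  by rewrite inE map_f ?orbT.
Qed.

Lemma Delta_alpha x xi : Delta A (finv (gen x)) xi -> Delta A (gen x) (translate (gen x) xi).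
Proof.
case=> Ho hx; split; first exact: Omega_translate.
by rewrite /translate fmulVl; apply: OT_e; case: Ho.
Qed.

Lemma mem_dec xi (u : FG) a w : val u = a :: w ->
  (xi u <-> translate (lt1 (linv a)) xi (mkFG w)).
Proof.
move=> Hu; rewrite /translate finv_lt linvK -(FG_dec Hu); by [].
Qed.

Lemma lt_pos (y : G) : lt1 (y, true) = gen y.
Proof. by []. Qed.
Lemma lt_neg (z : G) : lt1 (z, false) = finv (gen z).
Proof. by rewrite finv_gen. Qed.

Lemma OT_det (s : seq letter) : reduced s -> forall x zeta zeta',
  OT zeta -> OT zeta' -> zeta (gen x) -> zeta' (gen x) ->
  ohead s != Some (x, true) ->
  (zeta (mkFG s) <-> zeta' (mkFG s)).
Proof.
elim: s => [|a s IH] Hr x z z' Hz Hz' hx hx' Hh.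
  by split=> _; [apply: OT_e Hz' | apply: OT_e Hz].
have Hv : val (mkFG (a :: s)) = a :: s by rewrite mkFG_red.
case: a Hr Hh Hv => y [] Hr Hh Hv.
- have Hne : y <> x by move=> E; move: Hh; rewrite E eqxx.
  split=> H.
  + by case: Hne; apply: (OT_uniq Hz) hx; rewrite -lt_pos; apply: OT_pre Hz H Hv.
  + by case: Hne; apply: (OT_uniq Hz') hx'; rewrite -lt_pos; apply: OT_pre Hz' H Hv.
- have P1 : z (mkFG ((y,false)::s)) -> z (finv (gen y)).
    by move=> H; rewrite -lt_neg; exact: OT_pre Hz H Hv.
  have P2 : z' (mkFG ((y,false)::s)) -> z' (finv (gen y)).
    by move=> H; rewrite -lt_neg; exact: OT_pre Hz' H Hv.
  have [hy|hy] := boolP (A y x); last first.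
    split=> H; [have := P1 H | have := P2 H].
      by rewrite (OT_A _ Hz hx) (negbTE hy).
    by rewrite (OT_A _ Hz' hx') (negbTE hy).
  rewrite !(mem_dec _ Hv) /=.
  have h1 : z (finv (gen y)) by rewrite (OT_A _ Hz hx).
  have h2 : z' (finv (gen y)) by rewrite (OT_A _ Hz' hx').
  rewrite lt_pos; apply: (IH (reduced_behead Hr) y).
  + exact: OT_translate.
  + exact: OT_translate.
  + by rewrite /translate fmulVl; apply: OT_e Hz.
  + by rewrite /translate fmulVl; apply: OT_e Hz'.
  + clear P1 P2; case: s Hr {IH Hv Hh} => //= b s /andP[nb _]; apply: contra nb => /eqP[->] //.
Qed.

End OmegaL.

Section P3.
Variable G : eqType.
Variable A : G -> G -> bool.
Local Notation letter := (letter G).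
Local Notation FG := (FG G).
Local Notation OT := (OmegaTau A).
Local Notation Om := (Omega A).

Lemma negword (s : seq letter) : reduced s -> forall zeta, OT zeta ->
  (forall y, zeta (gen y) -> ohead s != Some (y, true)) ->
  zeta (mkFG s) -> all (fun a : letter => ~~ a.2) s.
Proof.
elim: s => // a s IH Hr z Hz Hy Hs.
have Hv : val (mkFG (a :: s)) = a :: s by rewrite mkFG_red.
have Ha := OT_pre Hz Hs Hv.
case: a Hr Hy Hs Hv Ha => y [] Hr Hy Hs Hv Ha.
  by move: (Hy y Ha); rewrite /= eqxx.
rewrite /=; move: Hs; rewrite (mem_dec _ Hv) /= lt_pos => Hs.
rewrite lt_neg in Ha.
have HZ : OT (translate (gen y) z) by apply: OT_translate.
have HZy : translate (gen y) z (gen y) by rewrite /translate fmulVl; apply: OT_e Hz.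
apply: (IH (reduced_behead Hr) _ HZ) => // y' Hy'.
rewrite (OT_uniq HZ Hy' HZy).
clear Hy; case: s Hr {IH Hv Hs} => //= b s /andP[nb _]; apply: contra nb => /eqP[->] //.
Qed.

Lemma OT_unb_pos eta : OT eta -> unbounded eta -> exists j, eta (gen j).
Proof.
move=> Ho Hu; case: (pselect (exists j, eta (gen j))) => // Hn.
exfalso; apply: Hu; exists (fe G) => s hs.
rewrite /fle fmul1r /positive val_finv; apply: all_norm.
rewrite all_rev all_map.
have := @negword (val s) (valP s) eta Ho.
rewrite mkFGK => /(_ _ hs).
have H : (forall y, eta (gen y) -> ohead (val s) != Some (y, true)).
  by move=> y hy; case: Hn; exists y.
move=> /(_ H) Hall; apply/allP => a /(allP Hall); by case: a => x [].
Qed.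

Definition evc (c : bool * G) (j : G) : bool := if c.1 then j == c.2 else A c.2 j.

Lemma InRing_ext (h h' : G -> int) : (forall j, h j = h' j) -> InRing A h -> InRing A h'.
Proof. by move=> E; rewrite (funext E). Qed.

Lemma InRing_const (c : int) : InRing A (fun _ => c).
Proof.
have H0 : InRing A (fun _ => 0%R).
  apply: InRing_ext (InRadd (InR1 A) (InRopp (InR1 A))) => j /=; by rewrite subrr.
have Hn : forall n : nat, InRing A (fun _ => Posz n).
  elim=> // n IH; apply: InRing_ext (InRadd IH (InR1 A)) => j.
  by rewrite -addn1 PoszD.
case: c => n; first exact: Hn.
apply: InRing_ext (InRopp (Hn n.+1)) => j; by rewrite NegzE.
Qed.

Lemma InRing_evc c : InRing A (fun j => Posz (evc c j)).
Proof. by case: c => [[] i]; [apply: InRdelta | apply: InRrho]. Qed.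

Lemma InRing_bits (bs : seq (bool * G)) (h : G -> int) :
  (forall j j', (forall c, c \in bs -> evc c j = evc c j') -> h j = h j') ->
  InRing A h.
Proof.
elim: bs h => [|c bs IH] h Hh.
  case: (pselect (exists j : G, True)) => [[j0 _]|Hn].
    apply: InRing_ext (InRing_const (h j0)) => j; exact: Hh.
  apply: InRing_ext (InR1 A) => j; case: Hn; by exists j.
pose ht (b : bool) j := epsilon (inhabits 0%R) (fun v => exists j',
   evc c j' = b /\ (forall d, d \in bs -> evc d j' = evc d j) /\ v = h j').
have Ht : forall b, InRing A (ht b).
  move=> b; apply: IH => j j' E; rewrite /ht; congr epsilon.
  apply: functional_extensionality_dep => v; apply: propositional_extensionality.
  split; case=> j'' [H1 [H2 H3]]; exists j''; split => //; split => // d hd;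
  by rewrite H2 // E.
have Hv : forall j, ht (evc c j) j = h j.
  move=> j; rewrite /ht.
  set P := (fun v => _).
  have HP : exists v, P v by exists (h j), j.
  have := epsilon_spec (inhabits 0%R) P HP.
  case=> j3 [E1 [E2 ->]]; apply: Hh => d; rewrite inE => /orP[/eqP->|hd] //.
  exact: E2.
apply: InRing_ext (InRadd (InRmul (InRing_evc c) (Ht true))
                    (InRmul (InRadd (InR1 A) (InRopp (InRing_evc c))) (Ht false))) => j /=.
case E: (evc c j); rewrite -E Hv E /=; ring.
Qed.

End P3.

Section P4.
Variable G : eqType.
Variable A : G -> G -> bool.
Local Notation letter := (letter G).
Local Notation FG := (FG G).
Local Notation OT := (OmegaTau A).
Local Notation Om := (Omega A).

Definition Det (F : seq FG) (phi : FGset G -> int) :=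
  forall xi eta, Om xi -> Om eta -> (forall s, s \in F -> (xi s <-> eta s)) ->
    phi xi = phi eta.

Definition posHead (s : FG) : option G :=
  if val s is (x, true) :: _ then Some x else None.
Definition negHead (s : FG) : option G :=
  if val s is (x, false) :: _ then Some x else None.

Lemma psi_char h xi v :
  (exists o, SigmaRel xi o /\ HatLim A h o (fun i => xi (finv (gen i))) v) ->
  (forall v', (exists o, SigmaRel xi o /\ HatLim A h o (fun i => xi (finv (gen i))) v') -> v' = v) ->
  psi A h xi = v.
Proof.
move=> H1 H2; apply: H2; rewrite /psi.
pose P : int -> Prop := fun v0 => exists o, SigmaRel xi o /\ HatLim A h o (fun i => xi (finv (gen i))) v0.
exact: (@epsilon_spec int (inhabits 0%R) P (ex_intro _ v H1)).
Qed.
Lemma val_gen (y : G) : val (gen y) = [:: (y, true)].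
Proof. by []. Qed.
Lemma val_finv_gen (y : G) : val (finv (gen y)) = [:: (y, false)].
Proof. by []. Qed.

Lemma base (F : seq FG) phi : (forall s, s \in F -> size (val s) <= 1) ->
  Det F phi -> exists h, InRing A h /\ forall xi, Om xi -> phi xi = psi A h xi.
Proof.
move=> Hs Hd.
set P := pmap posHead F; set N := pmap negHead F.
pose pat j (xi : FGset G) := (forall y, y \in P -> (xi (gen y) <-> y = j)) /\
                 (forall z, z \in N -> (xi (finv (gen z)) <-> A z j)).
pose h j := epsilon (inhabits 0%R) (fun v => exists xi, Om xi /\ pat j xi /\ v = phi xi).
have H1 : forall xi j, Om xi -> pat j xi -> h j = phi xi.
  move=> xi j Ho Hp; rewrite /h.
  set Q := (fun v => _).
  have HQ : exists v, Q v by exists (phi xi), xi.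
  have [xi' [Ho' [Hp' ->]]] := epsilon_spec (inhabits 0%R) Q HQ.
  apply: Hd => // s sF; have := Hs s sF.
  case Es: (val s) => [|a [|b w]] // _.
  - have -> : s = fe G by apply: FG_eq; rewrite Es.
    by split=> _; [exact: OT_e (Omega_OT Ho) | exact: OT_e (Omega_OT Ho')].
  - case: a Es => y [] Es.
    + have -> : s = gen y by apply: FG_eq; rewrite Es.
      have yP : y \in P by rewrite mem_pmap -(_ : posHead s = Some y) ?map_f // /posHead Es.
      by rewrite (proj1 Hp' y yP) (proj1 Hp y yP).
    + have -> : s = finv (gen y) by apply: FG_eq; rewrite Es.
      have yN : y \in N by rewrite mem_pmap -(_ : negHead s = Some y) ?map_f // /negHead Es.
      by rewrite (proj2 Hp' y yN) (proj2 Hp y yN).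
exists h; split.
  apply: (@InRing_bits G A ([seq (true, y) | y <- P] ++ [seq (false, z) | z <- N])).
  move=> j j' E; rewrite /h; congr epsilon.
  have Hpat : forall xi, pat j xi <-> pat j' xi.
    move=> xi; rewrite /pat.
    have EP : forall y, y \in P -> (y = j <-> y = j').
      move=> y yP; have := E (true, y); rewrite mem_cat map_f // => /(_ erefl) /=.
      rewrite /evc /= => Ejj; split=> Ey; subst y; move: Ejj; rewrite eqxx; [by move=> /esym/eqP -> | by move=> /eqP ->].
    have EN : forall z, z \in N -> A z j = A z j'.
      move=> z zN; have := E (false, z); rewrite mem_cat map_f ?orbT //; by move/(_ erefl).
    split; case=> Ha Hb; split=> [y yP|z zN].
    + by rewrite Ha // EP.
    + by rewrite Hb // EN.
    + by rewrite Ha // EP.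
    + by rewrite Hb // EN.
  apply: functional_extensionality_dep => v; apply: propositional_extensionality.
  by split; case=> xi [Ho [Hp Hv]]; exists xi; rewrite -Hpat in Hp * .
move=> xi Ho; have HT := Omega_OT Ho.
case: (pselect (exists y, xi (gen y))) => [[y hy]|Hn].
- have -> : phi xi = h y.
    symmetry; apply: H1 => //; split.
    + move=> y' _; split; first by move=> H; exact: OT_uniq HT H hy.
      by move=> ->.
    + move=> z _; exact: OT_A.
  symmetry; apply: psi_char.
    exists (Some y); split => //; exists [::], [::] => j -> _ //.
  move=> v [[y'|] [/= Hy' [K [F' HK]]]]; last by case: (Hy' y).
  rewrite -(OT_uniq HT Hy' hy) in HK *.
  symmetry; apply: HK => // i _; by rewrite (OT_A _ HT Hy').
- have Hpat : forall j, j \notin P -> (forall z, z \in N -> (A z j <-> xi (finv (gen z)))) ->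
      h j = phi xi.
    move=> j jP HN; apply: H1 => //; split.
    + move=> y yP; split=> [H|E]; first by case: Hn; exists y.
      by move: jP; rewrite -E yP.
    + by move=> z zN; rewrite HN.
  symmetry; apply: psi_char.
    exists None; split; first by move=> y hy; apply: Hn; exists y.
    exists P, N => j /= jP HN; exact: Hpat.
  move=> v [[y'|] [/= Hy' [K [F' HK]]]]; first by case: Hn; exists y'.
  case: Ho => _ /(_ ([seq gen k | k <- K ++ P] ++ [seq finv (gen i) | i <- F' ++ N])).
  case=> eta [Heta Hu Hag].
  have [j hj] := OT_unb_pos Heta Hu.
  have jKP : j \notin K ++ P.
    apply/negP => jin; apply: Hn; exists j; apply/Hag => //.
    by rewrite mem_cat map_f.
  have HA : forall i, i \in F' ++ N -> (A i j <-> xi (finv (gen i))).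
    move=> i iin; rewrite -(OT_A _ Heta hj); apply: Hag.
    by rewrite mem_cat [X in _ || X]map_f ?orbT.
  rewrite mem_cat negb_or in jKP; case/andP: jKP => jK jP.
  rewrite -(HK j) //; last by move=> i iF; apply: HA; rewrite mem_cat iF.
  apply: Hpat => // z zN; apply: HA; by rewrite mem_cat zN orbT.
Qed.

End P4.

Section P5.
Variable G : eqType.
Variable A : G -> G -> bool.
Local Notation letter := (letter G).
Local Notation FG := (FG G).
Local Notation OT := (OmegaTau A).
Local Notation Om := (Omega A).
Local Notation Det := (Det A).

Lemma Det_cont (D : FGset G -> Prop) F phi : (forall xi, D xi -> Om xi) -> Det F phi -> contOn D phi.
Proof.
move=> HD Hd xi Dxi; exists F => eta Deta Hag; apply: Hd; auto.
Qed.

Lemma contOn_add (D : FGset G -> Prop) f1 f2 : contOn D f1 -> contOn D f2 ->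
  contOn D (fun xi => f1 xi + f2 xi)%R.
Proof.
move=> H1 H2 xi Dxi; have [F1 HF1] := H1 xi Dxi; have [F2 HF2] := H2 xi Dxi.
exists (F1 ++ F2) => eta Deta Hag.
rewrite (HF1 eta) ?(HF2 eta) // => s hs; apply: Hag; by rewrite mem_cat hs ?orbT.
Qed.

Lemma contOn0 (D : FGset G -> Prop) : contOn D (fun _ => 0%R).
Proof. by move=> xi _; exists [::]. Qed.

Lemma Lalpha_add S (f1 f2 : G -> FGset G -> int) xi :
  Lalpha A S (fun x xi => f1 x xi + f2 x xi)%R xi = (Lalpha A S f1 xi + Lalpha A S f2 xi)%R.
Proof.
rewrite /Lalpha -big_split; apply: eq_bigr => x _ /=.
rewrite /ext /alpha_inv; case: pselect => ? /=; case: pselect => ? /=; ring.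
Qed.

Lemma Lalpha_term0 (f : G -> FGset G -> int) x xi :
  (forall xi, Delta A (gen x) xi -> f x xi = 0%R) ->
  (ext (Delta A (gen x)) (f x) xi - alpha_inv A x (f x) xi = 0)%R.
Proof.
move=> H; rewrite /ext /alpha_inv.
case: pselect => [D1|?] /=; case: pselect => [D2|?] /=.
- by rewrite H // H ?subrr //; exact: Delta_alpha.
- by rewrite H // subrr.
- by rewrite H ?subrr //; exact: Delta_alpha.
- by rewrite subrr.
Qed.

Lemma Lalpha_sub S T (f : G -> FGset G -> int) xi :
  uniq S -> uniq T -> {subset S <= T} ->
  (forall x, x \notin S -> forall xi, Delta A (gen x) xi -> f x xi = 0%R) ->
  Lalpha A T f xi = Lalpha A S f xi.
Proof.
move=> uS uT sST H0; rewrite /Lalpha (bigID (fun x => x \in S)) /=.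
rewrite [X in (_ + X)%R]big1 ?addr0; last by move=> x xS; apply: Lalpha_term0; exact: H0.
rewrite -big_filter; apply: perm_big; apply: uniq_perm; first exact: filter_uniq.
  exact: uS.
by move=> x; rewrite mem_filter; case xS: (x \in S) => //=; rewrite sST.
Qed.

Definition Rep (phi : FGset G -> int) :=
  exists h, InRing A h /\ exists S (f : G -> FGset G -> int),
    [/\ uniq S, (forall x, contOn (Delta A (gen x)) (f x)),
        (forall x, x \notin S -> forall xi, Delta A (gen x) xi -> f x xi = 0%R)
      & forall xi, Om xi -> phi xi = (psi A h xi + Lalpha A S f xi)%R].

Definition KF (F : seq FG) := undup (pmap (@posHead G) F).
Definition f0 (F : seq FG) phi (x : G) : FGset G -> int :=
  if x \in KF F then phi else fun _ => 0%R.
Definition F' (F : seq FG) : seq FG :=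
  [seq gen x | x <- KF F] ++ [seq finv (gen x) | x <- KF F] ++
  [seq finv (gen z) | z <- pmap (@negHead G) F] ++ [seq mkFG (behead (val s)) | s <- F].
Definition phi' (F : seq FG) phi xi := (phi xi - Lalpha A (KF F) (f0 F phi) xi)%R.

Lemma reduced_beh (w : seq letter) : reduced w -> reduced (behead w).
Proof. by case: w => //= a w; exact: reduced_behead. Qed.

Lemma F'_size F n : (forall s, s \in F -> size (val s) <= n.+2) ->
  forall s, s \in F' F -> size (val s) <= n.+1.
Proof.
move=> Hs s; rewrite !mem_cat => /or4P[] /mapP[y yin ->] //.
rewrite mkFG_red; last by apply: reduced_beh; exact: valP.
by rewrite size_behead; have := Hs y yin; case: (size _).
Qed.

Lemma LK F phi xi : Lalpha A (KF F) (f0 F phi) xi =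
  (\sum_(x <- KF F) ext (Delta A (gen x)) phi xi - \sum_(x <- KF F) alpha_inv A x phi xi)%R.
Proof.
rewrite /Lalpha -sumrB big_seq [RHS]big_seq; apply: eq_bigr => x xK.
by rewrite /f0 xK.
Qed.

Lemma trans_gen_in xi x : OT xi -> xi (finv (gen x)) -> translate (gen x) xi (gen x).
Proof. by move=> Ho _; rewrite /translate fmulVl; apply: OT_e Ho. Qed.

Lemma extT (D : FGset G -> Prop) f xi : D xi -> ext D f xi = f xi.
Proof. by rewrite /ext; case: pselect. Qed.
Lemma extF (D : FGset G -> Prop) f xi : ~ D xi -> ext D f xi = 0%R.
Proof. by rewrite /ext; case: pselect. Qed.
Lemma alphaT x f xi : Delta A (finv (gen x)) xi -> alpha_inv A x f xi = f (translate (gen x) xi).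
Proof. by rewrite /alpha_inv; case: pselect. Qed.
Lemma alphaF x f xi : ~ Delta A (finv (gen x)) xi -> alpha_inv A x f xi = 0%R.
Proof. by rewrite /alpha_inv; case: pselect. Qed.

Lemma step_det F phi n : (forall s, s \in F -> size (val s) <= n.+2) ->
  Det F phi -> Det (F' F) (phi' F phi).
Proof.
move=> Hs Hd xi eta Hxi Heta Hag.
have Txi := Omega_OT Hxi; have Teta := Omega_OT Heta.
have AgP : forall x, x \in KF F -> (xi (gen x) <-> eta (gen x)).
  by move=> x xK; apply: Hag; rewrite mem_cat map_f.
have AgN : forall x, x \in KF F -> (xi (finv (gen x)) <-> eta (finv (gen x))).
  by move=> x xK; apply: Hag; rewrite !mem_cat [X in _ || (X || _)]map_f ?orbT.
have AgN' : forall s z, s \in F -> negHead s = Some z -> (xi (finv (gen z)) <-> eta (finv (gen z))).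
  move=> s z sF Hz; apply: Hag; rewrite !mem_cat [X in _ || (_ || (X || _))]map_f ?orbT //.
  by rewrite mem_pmap -Hz map_f.
have AgT : forall s, s \in F -> (xi (mkFG (behead (val s))) <-> eta (mkFG (behead (val s)))).
  move=> s sF; apply: Hag; rewrite !mem_cat [X in _ || (_ || (_ || X))]map_f ?orbT //.
have Ealpha : (\sum_(x <- KF F) alpha_inv A x phi xi = \sum_(x <- KF F) alpha_inv A x phi eta)%R.
  rewrite big_seq [RHS]big_seq; apply: eq_bigr => x xK.
  case: (pselect (Delta A (finv (gen x)) xi)) => [D1|n1];
    case: (pselect (Delta A (finv (gen x)) eta)) => [D2|n2].
  - rewrite !alphaT //; have h1 := D1.2; have h2 := D2.2.
    apply: Hd; [exact: (Omega_translate Hxi h1) | exact: (Omega_translate Heta h2) |].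
    move=> s sF; case Es: (val s) => [|a w].
      have -> : s = fe G by apply: FG_eq; rewrite Es.
      by rewrite /translate fmul1r; split.
    have [Ea|Ea] := eqVneq a (x, true).
    + subst a; rewrite !(mem_dec _ Es) /= lt_neg !translate_comp fmulVl.
      rewrite /translate finv1 !fmul1.
      by have := AgT s sF; rewrite Es.
    + rewrite -(mkFGK s) Es; apply: (@OT_det G A (a :: w) _ x).
      * by rewrite -Es; exact: valP.
      * exact: (OT_translate Txi h1).
      * exact: (OT_translate Teta h2).
      * exact: (trans_gen_in Txi h1).
      * exact: (trans_gen_in Teta h2).
      * by rewrite /=; apply/eqP => -[E]; rewrite E eqxx in Ea.
  - by case: n2; split => //; apply/AgN => //; exact: D1.2.
  - by case: n1; split => //; apply/AgN => //; exact: D2.2.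
  - by rewrite !alphaF.
have Eext : (phi xi - \sum_(x <- KF F) ext (Delta A (gen x)) phi xi =
             phi eta - \sum_(x <- KF F) ext (Delta A (gen x)) phi eta)%R.
  case: (pselect (exists y, y \in KF F /\ xi (gen y))) => [[y [yK hy]]|Hn].
    have hy' : eta (gen y) by apply/AgP.
    have uK : uniq (KF F) by exact: undup_uniq.
    have Hsum : forall zeta, Om zeta -> zeta (gen y) ->
        (\sum_(x <- KF F) ext (Delta A (gen x)) phi zeta = phi zeta)%R.
      move=> zeta Hz hz; rewrite (bigD1_seq y) //= big1 ?addr0; first by rewrite extT.
      move=> x xy; rewrite extF // => -[_ hx].
      by move: xy; rewrite (OT_uniq (Omega_OT Hz) hx hz) eqxx.
    by rewrite !Hsum // !subrr.
  have Hn' : forall y, y \in KF F -> ~ eta (gen y).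
    by move=> y yK hy; apply: Hn; exists y; split => //; apply/AgP.
  rewrite !big1_seq; first last.
  - by move=> x /= xK; rewrite extF // => -[_ hx]; case: Hn; exists x.
  - by move=> x /= xK; rewrite extF // => -[_ hx]; case: (Hn' x xK).
  congr (_ - _)%R; apply: Hd => // s sF.
  case Es: (val s) => [|[y []] w].
  - have -> : s = fe G by apply: FG_eq; rewrite Es.
    by split=> _; [exact: OT_e Teta | exact: OT_e Txi].
  - have yK : y \in KF F by rewrite mem_undup mem_pmap -(_ : posHead s = Some y) ?map_f // /posHead Es.
    split=> H.
    + by case: Hn; exists y; split => //; rewrite -lt_pos; apply: OT_pre Txi H Es.
    + by case: (Hn' y yK); rewrite -lt_pos; apply: OT_pre Teta H Es.
  - have Ey : xi (finv (gen y)) <-> eta (finv (gen y)) by apply: (AgN' s y sF); rewrite /negHead Es.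
    have [hy|hy] := pselect (xi (finv (gen y))).
    + have hy' : eta (finv (gen y)) by apply/Ey.
      rewrite !(mem_dec _ Es) /=.
      apply: (@OT_det G A w _ y).
      * by have := reduced_beh (valP s); rewrite Es.
      * exact: OT_translate.
      * exact: OT_translate.
      * exact: trans_gen_in.
      * exact: trans_gen_in.
      * have := valP s; rewrite Es; case: w {Es} => //= b w /andP[nb _].
        by apply: contra nb => /eqP[->].
    + split=> H; case: hy; first by rewrite -lt_neg; apply: OT_pre Txi H Es.
      by apply/Ey; rewrite -lt_neg; apply: OT_pre Teta H Es.
rewrite /phi' !LK.
have E : forall a b c : int, (a - (b - c) = (a - b) + c)%R by move=> a b c; ring.
by rewrite !E Eext Ealpha.
Qed.

End P5.

Section P6.
Variable G : eqType.
Variable A : G -> G -> bool.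
Local Notation FG := (FG G).
Local Notation Om := (Omega A).

Lemma main_rep n : forall (F : seq FG) phi, (forall s, s \in F -> size (val s) <= n.+1) ->
  Det A F phi -> Rep A phi.
Proof.
elim: n => [|n IH] F phi Hs Hd.
  have [h [Hh Hp]] := base Hs Hd.
  exists h; split => //; exists [::], (fun _ _ => 0%R); split => //.
  - move=> x; exact: contOn0.
  - by move=> xi Ho; rewrite Hp // /Lalpha big_nil addr0.
have [h [Hh [S [f [uS cf zf Ef]]]]] :=
  IH (F' F) (phi' A F phi) (F'_size Hs) (step_det Hs Hd).
exists h; split => //.
exists (undup (KF F ++ S)), (fun x xi => f0 F phi x xi + f x xi)%R; split.
- exact: undup_uniq.
- move=> x; apply: contOn_add => //; rewrite /f0; case: ifP => _.
    apply: (Det_cont _ Hd) => xi; by case.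
  exact: contOn0.
- move=> x; rewrite mem_undup mem_cat negb_or => /andP[xK xS] xi Dxi.
  by rewrite /f0 (negbTE xK) zf // add0r.
- move=> xi Ho; rewrite Lalpha_add.
  rewrite (Lalpha_sub (S := KF F) (f := f0 F phi)); first last.
  + by move=> x xK xi' _; rewrite /f0 (negbTE xK).
  + by move=> x xK; rewrite mem_undup mem_cat xK.
  + exact: undup_uniq.
  + exact: undup_uniq.
  rewrite (Lalpha_sub (S := S) (f := f)); first last.
  + exact: zf.
  + by move=> x xS; rewrite mem_undup mem_cat xS orbT.
  + exact: undup_uniq.
  + exact: uS.
  have := Ef xi Ho; rewrite /phi' => E.
  have -> : phi xi = (phi xi - Lalpha A (KF F) (f0 F phi) xi + Lalpha A (KF F) (f0 F phi) xi)%R.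
    by rewrite subrK.
  rewrite E; ring.
Qed.

End P6.

From mathcomp Require Import classical_sets mathcomp_extra.
From mathcomp Require Import finmap topology_structure compact product_topology function_spaces bool_topology discrete_topology.
Import Defs.

Section P7.
Variable G : eqType.
Variable A : G -> G -> bool.
Local Notation FG := (FG G).
Local Notation OT := (OmegaTau A).
Local Notation Om := (Omega A).
Local Notation T := (prod_topology (fun _ : FG => bool)).
Local Open Scope classical_set_scope.

Lemma approx_OT (xi : FGset G) :
  (forall L : seq FG, exists eta, OT eta /\ forall s, s \in L -> (eta s <-> xi s)) -> OT xi.
Proof.
move=> H; split.
- have [eta [He Hag]] := H [:: fe G]; apply/Hag; [by rewrite inE | exact: OT_e He].
- move=> w v hw hv k.
  have [eta [He Hag]] := H [:: w; v; fmul w (mkFG (take k (val (fmul (finv w) v))))].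
  apply/Hag; first by rewrite !inE eqxx !orbT.
  case: He => _ Hc _ _; apply: Hc; apply/Hag => //; by rewrite !inE eqxx ?orbT.
- move=> w y1 y2 hw h1 h2.
  have [eta [He Hag]] := H [:: w; fmul w (gen y1); fmul w (gen y2)].
  case: He => _ _ H3 _; apply: (H3 w); apply/Hag => //; by rewrite !inE eqxx ?orbT.
- move=> w y hw hy x.
  have [eta [He Hag]] := H [:: w; fmul w (gen y); fmul w (finv (gen x))].
  case: He => _ _ _ H4; rewrite -(H4 w y); first (split=> Hh; apply/Hag => //).
  + by rewrite !inE eqxx ?orbT.
  + by rewrite !inE eqxx ?orbT.
  + by apply/Hag => //; rewrite !inE eqxx ?orbT.
  + by apply/Hag => //; rewrite !inE eqxx ?orbT.
Qed.

Definition toP (b : T) : FGset G := fun s => b s.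
Definition cyl (b : T) (L : seq FG) : set T := [set c : T | forall s, s \in L -> c s = b s].

Lemma cyl_open b L : open (cyl b L).
Proof.
elim: L => [|s L IH].
  have -> : cyl b [::] = setT by apply/seteqP; split => // c _ s.
  exact: openT.
have -> : cyl b (s :: L) = (proj s @^-1` [set b s]) `&` cyl b L.
  apply/seteqP; split => c /=.
  - move=> H; split; first by apply: H; rewrite mem_head.
    by move=> t tL; apply: H; rewrite inE tL orbT.
  - case=> H1 H2 t; rewrite inE => /orP[/eqP->|]; [exact: H1 | exact: H2].
apply: openI => //; apply: open_comp; last exact: discrete_open.
move=> f _; exact: proj_continuous.
Qed.

Definition KO : set T := [set b : T | Om (toP b)].

Lemma KO_closed : closed KO.
Proof.
move=> p Hp.
have approx : forall L : seq FG, exists eta, [/\ OT eta, unbounded eta &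
                forall s, s \in L -> (eta s <-> toP p s)].
  move=> L; have := Hp (cyl p L).
  case; first by apply: open_nbhs_nbhs; split; [exact: cyl_open | by []].
  move=> c [[_ Hc] Hcyl].
  have [eta [He Hu Hag]] := Hc L; exists eta; split => // s sL.
  by rewrite Hag // /toP Hcyl.
split => //; apply: approx_OT => L; have [eta [He _ Hag]] := approx L.
by exists eta.
Qed.

Lemma KO_compact : compact KO.
Proof.
apply: (subclosed_compact KO_closed (B := setT)) => //.
have := @tychonoff _ (fun _ : FG => bool) _ (fun=> bool_compact).
by congr (compact _); rewrite eqEsubset.
Qed.

End P7.

HB.instance Definition PT_pointed (G : eqType) := isPointed.Build (prod_topology (fun _ : FG G => bool)) (fun _ => false).
Section P7b.
Variable G : eqType.
Variable A : G -> G -> bool.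
Local Notation FG := (FG G).
Local Notation T := (prod_topology (fun _ : FG => bool)).
Local Notation OT := (OmegaTau A).
Local Notation Om := (Omega A).
Local Open Scope classical_set_scope.
Local Notation KO := (KO A).
Lemma compact_det (g : FGset G -> int) : contOn Om g -> exists F, Det A F g.
Proof.
move=> hg.
have hc : forall b : T, exists L : seq FG, KO b -> forall eta, Om eta ->
    (forall s, s \in L -> (eta s <-> toP b s)) -> g eta = g (toP b).
  move=> b; case: (pselect (KO b)) => [Kb|nK]; last by exists [::].
  have [L HL] := hg _ Kb; by exists L.
pose Lf b := proj1_sig (cid (hc b)).
have HLf : forall b, KO b -> forall eta, Om eta ->
    (forall s, s \in Lf b -> (eta s <-> toP b s)) -> g eta = g (toP b).
  move=> b; exact: (proj2_sig (cid (hc b))).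
have K := @KO_compact G A; rewrite compact_cover in K.
have := K T KO (fun b => cyl b (Lf b)).
case.
- move=> b _; exact: cyl_open.
- move=> b Kb; exists b => //.
move=> D' sD' cov.
exists (flatten [seq Lf b | b <- D']) => xi eta Hxi Heta Hag.
pose toB (xi : FGset G) : T := fun s => `[< xi s >].
have toPB : forall xi, toP (toB xi) = xi.
  move=> z; apply: funext => s; apply: propext; rewrite /toP /toB; split => /asboolP //.
have KB : KO (toB xi) by rewrite /KO /= toPB.
have [b /= bD Hb] := cov _ KB.
have Kb : KO b by move: (sD' b bD); rewrite in_setE.
have E1 : forall s, s \in Lf b -> (xi s <-> toP b s).
  move=> s sL; rewrite /toP -(Hb s sL) /toB; split; [by move/asboolP | by move/asboolP].
rewrite (HLf b Kb xi Hxi E1) (HLf b Kb eta Heta) // => s sL.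
rewrite -Hag; first exact: E1.
by apply/flattenP; exists (Lf b) => //; apply: map_f.
Qed.

End P7b.

Import Defs.

Theorem lemma4p10 (G : eqType) (A : G -> G -> bool)
  (hA : forall i : G, exists j : G, A i j)
  (g : FGset G -> int) (hg : contOn (Omega A) g) :
  exists h : G -> int, InRing A h /\
  exists (S : seq G) (f : G -> FGset G -> int),
    [/\ uniq S,
        (forall x, contOn (Delta A (gen x)) (f x)),
        (forall x, x \notin S -> forall xi, Delta A (gen x) xi -> f x xi = 0%R)
      & (forall xi, Omega A xi -> g xi = (psi A h xi + Lalpha A S f xi)%R)].
Proof.
have [F HF] := compact_det hg.
pose n := \sum_(t <- F) size (val t).
have Hs : forall s, s \in F -> size (val s) <= n.+1.
  by move=> s sF; apply: leqW; apply: (le_sum_seq (fun t : FG G => size (val t)) sF).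
exact: (main_rep Hs HF).
Qed.
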